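(* Let $(A,I)$ be a prism and $m,n\ge0$. The map $\delta_\bullet\colon A\to W(A)$, followed by truncation and reduction $W(A)\to W_m(A)\to W_m(A/\phi^m(I_n)A)$, factors through $A/I_{m+n}$, giving a map $\delta_\bullet\colon A/I_{m+n}\to W_m(A/\phi^m(I_n)A)$.
   Context: A $\delta$-ring $A$ has Frobenius lift $\phi(x)=x^p+p\delta(x)$. The map $\delta_\bullet\colon A\to W(A)$ encoding the $\delta$-structure is the ring map with Witt coordinates $(x,\delta(x),\delta_2(x),\dots)$ and ghost coordinates $(x,\phi(x),\phi^2(x),\dots)$, i.e.\ $\phi^n(x)=\sum_{k=0}^np^k\delta_k(x)^{p^{n-k}}$. A prism $(A,I)$: $\delta$-ring, $I$ defining a Cartier divisor, $A$ derived $(p,I)$-complete, $p\in I+\phi(I)A$. $I_n=I\phi(I)\cdots\phi^n(I)A$. $W_m$ denotes $p$-typical Witt vectors with $m+1$ coordinates. *)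

(* Defs.v *)
From mathcomp Require Import all_boot all_algebra.
Set Implicit Arguments. Unset Strict Implicit. Unset Printing Implicit Defensive.
Import GRing.Theory.
Local Open Scope ring_scope.

Section Prism.
Variables (p : nat) (A : comPzRingType) (delta : A -> A).

(* delta-ring structure (Bhatt-Scholze): delta(x+y) = delta x + delta y
   + (x^p + y^p - (x+y)^p)/p, the last term written with the integers C(p,i)/p. *)
Definition is_delta_structure : Prop :=
  [/\ delta 0 = 0, delta 1 = 0,
      forall x y, delta (x * y) =
        x ^+ p * delta y + y ^+ p * delta x + p%:R * delta x * delta y &
      forall x y, delta (x + y) = delta x + delta y
        - \sum_(1 <= i < p) ('C(p, i) %/ p)%:R * x ^+ i * y ^+ (p - i)].

Definition frob (x : A) : A := x ^+ p + p%:R * delta x.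
Definition frobn (k : nat) : A -> A := iter k frob.

(* Witt coordinates delta_k of delta_bullet : A -> W(A).  They are the unique
   universal integral expressions with phi^n(x) = sum_k p^k delta_k(x)^(p^(n-k)).
   Explicitly, p^(n+1) delta_(n+1) = sum_(k<=n) p^k ((delta_k^p + p delta(delta_k))^(p^(n-k))
   - delta_k^(p^(n+1-k))), which after binomial expansion has integer coefficients
   wcoef j i = C(p^j, i) p^i / p^(j+1)  (exact division). *)
Definition wcoef (j i : nat) : nat := ('C(p ^ j, i) * p ^ i %/ p ^ j.+1)%N.

Fixpoint delta_seq (n : nat) (x : A) : seq A :=
  match n with
  | 0 => [:: x]
  | n'.+1 =>
      let s := delta_seq n' x in
      rcons s (\sum_(k < n'.+1) \sum_(1 <= i < (p ^ (n' - k)).+1)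
                 (wcoef (n' - k) i)%:R * (nth 0 s k) ^+ (p * (p ^ (n' - k) - i))
                   * (delta (nth 0 s k)) ^+ i)
  end.

Definition delta_k (k : nat) (x : A) : A := nth 0 (delta_seq k x) k.

Definition is_ideal (J : A -> Prop) : Prop :=
  [/\ J 0, forall x y, J x -> J y -> J (x + y) & forall a x, J x -> J (a * x)].

Definition gen_ideal (S : A -> Prop) : A -> Prop :=
  fun x => forall J, is_ideal J -> (forall s, S s -> J s) -> J x.

Definition ideal_mul (J K : A -> Prop) : A -> Prop :=
  gen_ideal (fun z => exists j k, [/\ J j, K k & z = j * k]).

Definition ideal_add (J K : A -> Prop) : A -> Prop :=
  fun z => exists j k, [/\ J j, K k & z = j + k].

Definition frobn_ext (k : nat) (J : A -> Prop) : A -> Prop :=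
  gen_ideal (fun z => exists x, J x /\ z = frobn k x).

Fixpoint I_n (I : A -> Prop) (n : nat) : A -> Prop :=
  match n with
  | 0 => I
  | n'.+1 => ideal_mul (I_n I n') (frobn_ext n'.+1 I)
  end.

(* I defines an (effective) Cartier divisor: there is a finite cover of Spec A by
   D(f_i) such that I A_(f_i) = g_i A_(f_i) with g_i a nonzerodivisor in A_(f_i),
   written without localizations. *)
Definition cartier_divisor (I : A -> Prop) : Prop :=
  is_ideal I /\
  exists (r : nat) (f g a : 'I_r -> A),
    \sum_(i < r) a i * f i = 1 /\
    forall i, [/\ I (g i),
      (forall x, I x -> exists (N : nat) (y : A), f i ^+ N * x = g i * y) &
      (forall y, g i * y = 0 -> exists N : nat, f i ^+ N * y = 0)].

(* A is derived f-complete iff RHom(A_f, A) = 0, i.e. the map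
   (y_n) |-> (y_n - f y_(n+1)) on A^N is bijective. *)
Definition derived_complete_elt (f : A) : Prop :=
  forall x : nat -> A, exists y : nat -> A,
    (forall n, y n - f * y n.+1 = x n) /\
    (forall y' : nat -> A, (forall n, y' n - f * y' n.+1 = x n) -> forall n, y' n = y n).

Definition derived_complete (J : A -> Prop) : Prop :=
  forall f, J f -> derived_complete_elt f.

Definition is_prism (I : A -> Prop) : Prop :=
  [/\ is_delta_structure,
      cartier_divisor I,
      derived_complete (gen_ideal (fun z => z = p%:R \/ I z)) &
      ideal_add I (frobn_ext 1 I) p%:R].

End Prism.

(* Main.v *)
Require Import Defs.
From mathcomp Require Import all_boot all_algebra.
From mathcomp Require Import ring zify.
Set Implicit Arguments. Unset Strict Implicit. Unset Printing Implicit Defensive.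
Import GRing.Theory.
Local Open Scope ring_scope.

Section Ideals.
Variable A : comPzRingType.

Lemma gen_is_ideal (S : A -> Prop) : is_ideal (gen_ideal S).
Proof.
split.
- by move=> J [J0 _ _] _.
- move=> x y Hx Hy J HJ HS; case: (HJ) => _ HD _; exact: HD (Hx J HJ HS) (Hy J HJ HS).
- move=> a x Hx J HJ HS; case: (HJ) => _ _ HM; exact: HM (Hx J HJ HS).
Qed.

Lemma gen_in (S : A -> Prop) s : S s -> gen_ideal S s.
Proof. by move=> Hs J _ HS; apply: HS. Qed.

Lemma gen_min (S J : A -> Prop) : is_ideal J -> (forall s, S s -> J s) ->
  forall z, gen_ideal S z -> J z.
Proof. by move=> HJ HS z Hz; apply: Hz. Qed.

Lemma id0 (J : A -> Prop) : is_ideal J -> J 0. Proof. by case. Qed.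
Lemma idD (J : A -> Prop) x y : is_ideal J -> J x -> J y -> J (x + y). Proof. by case=> _ H _; apply: H. Qed.
Lemma idMl (J : A -> Prop) a x : is_ideal J -> J x -> J (a * x). Proof. by case=> _ _ H; apply: H. Qed.
Lemma idMr (J : A -> Prop) a x : is_ideal J -> J x -> J (x * a). Proof. by move=> HJ Hx; rewrite mulrC; apply: idMl. Qed.
Lemma idN (J : A -> Prop) x : is_ideal J -> J x -> J (- x).
Proof. by move=> HJ Hx; rewrite -mulN1r; apply: idMl. Qed.
Lemma idB (J : A -> Prop) x y : is_ideal J -> J x -> J y -> J (x - y).
Proof. by move=> HJ Hx Hy; apply: idD => //; apply: idN. Qed.
Lemma idX (J : A -> Prop) x n : is_ideal J -> J x -> (0 < n)%N -> J (x ^+ n).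
Proof. by move=> HJ Hx; case: n => // n _; rewrite exprS; apply: idMr. Qed.
Lemma idsum (J : A -> Prop) (I : Type) (r : seq I) (P : pred I) (F : I -> A) : is_ideal J ->
  (forall i, P i -> J (F i)) -> J (\sum_(i <- r | P i) F i).
Proof.
move=> HJ HF; apply: (big_ind J) => //; [exact: id0 | move=> x y; exact: idD].
Qed.
Lemma idT : is_ideal (fun _ : A => True). Proof. by split. Qed.
End Ideals.
Section IdNat.
Variable A : comPzRingType.
Lemma idsum_nat (J : A -> Prop) m n (F : nat -> A) : is_ideal J ->
  (forall i, (m <= i < n)%N -> J (F i)) -> J (\sum_(m <= i < n) F i).
Proof.
move=> HJ HF; rewrite big_nat_cond; apply: idsum => // i /andP [H _]; exact: HF.
Qed.
End IdNat.

Section Delta.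
Variables (p : nat) (A : comPzRingType) (delta : A -> A).
Hypothesis pr : prime p.
Hypothesis hd : is_delta_structure p delta.

Let p_gt0 : (0 < p)%N. Proof. exact: prime_gt0. Qed.

Lemma binom_p (x y : A) : (x + y) ^+ p = x ^+ p + y ^+ p +
  p%:R * \sum_(1 <= i < p) ('C(p, i) %/ p)%:R * x ^+ i * y ^+ (p - i).
Proof.
rewrite addrC exprDn -(big_mkord xpredT (fun i => y ^+ (p - i) * x ^+ i *+ 'C(p, i))).
have p1 : (1 < p)%N by exact: prime_gt1.
rewrite big_ltn // big_nat_recr /=; last exact: ltnW.
rewrite subn0 subnn bin0 binn !expr0 !mulr1 mul1r !mulr1n.
rewrite mulr_sumr (eq_big_nat _ _ (F2 := fun i => p%:R * (('C(p, i) %/ p)%:R * x ^+ i * y ^+ (p - i)))); first ring.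
move=> i /andP [i1 ip].
rewrite -mulr_natl !mulrA -natrM mulnC divnK; first ring.
by apply: prime_dvd_bin => //; rewrite i1 ip.
Qed.

Lemma delta0 : delta 0 = 0. Proof. by case: hd. Qed.
Lemma deltaM x y : delta (x * y) = x ^+ p * delta y + y ^+ p * delta x + p%:R * delta x * delta y.
Proof. by case: hd => _ _ H _; apply: H. Qed.
Lemma deltaD x y : delta (x + y) = delta x + delta y
        - \sum_(1 <= i < p) ('C(p, i) %/ p)%:R * x ^+ i * y ^+ (p - i).
Proof. by case: hd => _ _ _ H; apply: H. Qed.

Lemma frob0 : frob p delta 0 = 0.
Proof. by rewrite /frob delta0 mulr0 addr0 expr0n eqn0Ngt p_gt0. Qed.
Lemma frobM x y : frob p delta (x * y) = frob p delta x * frob p delta y.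
Proof. rewrite /frob deltaM exprMn; ring. Qed.

Lemma frobD x y : frob p delta (x + y) = frob p delta x + frob p delta y.
Proof. rewrite /frob deltaD binom_p; ring. Qed.

Lemma frobnS k x : frobn p delta k.+1 x = frob p delta (frobn p delta k x).
Proof. by []. Qed.
Lemma frobnSr k x : frobn p delta k.+1 x = frobn p delta k (frob p delta x).
Proof. exact: iterSr. Qed.
Lemma frobnD a b x : frobn p delta (a + b) x = frobn p delta a (frobn p delta b x).
Proof. exact: iterD. Qed.
Lemma frobn0 k : frobn p delta k 0 = 0.
Proof. by elim: k => // k IH; rewrite frobnS IH frob0. Qed.
Lemma frobnM k x y : frobn p delta k (x * y) = frobn p delta k x * frobn p delta k y.
Proof. by elim: k => // k IH; rewrite !frobnS IH frobM. Qed.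
Lemma frobnDr k x y : frobn p delta k (x + y) = frobn p delta k x + frobn p delta k y.
Proof. by elim: k => // k IH; rewrite !frobnS IH frobD. Qed.

Lemma preim_ideal k (J : A -> Prop) : is_ideal J -> is_ideal (fun x => J (frobn p delta k x)).
Proof.
move=> HJ; split.
- by rewrite frobn0; apply: id0.
- by move=> x y Hx Hy; rewrite frobnDr; apply: idD.
- by move=> a x Hx; rewrite frobnM; apply: idMl.
Qed.

Lemma Z_ideal (K : A -> Prop) : is_ideal K -> is_ideal (fun z => K z /\ K (delta z)).
Proof.
move=> HK; split.
- by rewrite delta0; split; apply: id0.
- move=> x y [Kx Kdx] [Ky Kdy]; split; first exact: idD.
  rewrite deltaD; apply: idB => //; first exact: idD.
  apply: idsum_nat => // i /andP [i1 ip]; apply: idMl => //; apply: idX => //.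
  by rewrite subn_gt0.
- move=> a x [Kx Kdx]; split; first exact: idMl.
  rewrite deltaM; apply: idD => //; first apply: idD => //.
  + exact: idMl.
  + by apply: idMr => //; apply: idX.
  + exact: idMl.
Qed.

Lemma delta_shift (K K' : A -> Prop) : is_ideal K' -> (forall z, K z -> K' z) ->
  (forall z, K z -> K' (delta z)) -> forall a z, K z -> K' (delta (a + z) - delta a).
Proof.
move=> HK' sub Hd a z Kz; rewrite deltaD (_ : forall u v w : A, u + v - w - u = v - w); last by move=> u v w; ring.
apply: idB => //; first exact: Hd.
apply: idsum_nat => // i /andP [i1 ip]; apply: idMl => //; apply: idX => //.
  exact: sub.
by rewrite subn_gt0.
Qed.

Variable I : A -> Prop.
Hypothesis HI : is_ideal I.

Local Notation F := (frobn_ext p delta).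
Local Notation In := (I_n p delta I).
Local Notation phn := (frobn p delta).

Lemma F_ideal k J : is_ideal (F k J). Proof. exact: gen_is_ideal. Qed.
Lemma In_ideal s : is_ideal (In s). Proof. by case: s => [|s] //; exact: gen_is_ideal. Qed.
Lemma F_in k (J : A -> Prop) x : J x -> F k J (phn k x).
Proof. by move=> Jx; apply: gen_in; exists x. Qed.

Lemma mulr_ideal (K : A -> Prop) d : is_ideal K -> is_ideal (fun c => K (c * d)).
Proof.
move=> HK; split.
- by rewrite mul0r; apply: id0.
- by move=> x y Hx Hy; rewrite mulrDl; apply: idD.
- by move=> a x Hx; rewrite -mulrA; apply: idMl.
Qed.

Lemma Lprod a s c d : F a (In s) c -> F (a + s.+1) I d -> F a (In s.+1) (c * d).
Proof.
move=> Hc Hd.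
apply: (gen_min (J := fun c => F a (In s.+1) (c * d))) Hc; first exact: mulr_ideal (F_ideal _ _).
move=> _ [w [Hw ->]].
rewrite mulrC.
apply: (gen_min (J := fun d => F a (In s.+1) (d * phn a w))) Hd; first exact: mulr_ideal (F_ideal _ _).
move=> _ [b [Hb ->]].
rewrite frobnD -frobnM mulrC; apply: F_in.
apply: gen_in; exists w, (phn s.+1 b); split => //; exact: F_in.
Qed.

Lemma L1 s z : In s.+1 z -> F 1 (In s) z.
Proof.
elim: s z => [|s IH] z Hz.
  apply: (gen_min (J := F 1 I)) Hz; first exact: F_ideal.
  move=> _ [j [k [_ Hk ->]]]; exact: idMl (F_ideal _ _) Hk.
apply: (gen_min (J := F 1 (In s.+1))) Hz; first exact: F_ideal.
move=> _ [j [k [Hj Hk ->]]].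
apply: Lprod; first exact: IH.
by rewrite add1n.
Qed.

Lemma L2 a b (J : A -> Prop) z : F a J z -> F (b + a) J (phn b z).
Proof.
move=> Hz; apply: (gen_min (J := fun z => F (b + a) J (phn b z))) Hz.
  exact: preim_ideal (F_ideal _ _).
move=> _ [w [Hw ->]]; rewrite -frobnD; exact: F_in.
Qed.

Lemma Lmono j s z : F j (In s.+1) z -> F j.+1 (In s) z.
Proof.
move=> Hz; apply: (gen_min (J := F j.+1 (In s))) Hz; first exact: F_ideal.
move=> _ [x [Hx ->]]; rewrite -addn1; apply: L2; exact: L1.
Qed.

Lemma LB_core s j :
  (forall u v, In s u -> F s.+1 I v ->
     F j.+1 (In s) (phn j v ^+ p * delta (phn j u))) ->
  forall z, F j (In s.+1) z -> F j.+1 (In s) (delta z).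
Proof.
move=> Hda z Hz.
suff: F j.+1 (In s) z /\ F j.+1 (In s) (delta z) by case.
apply: (gen_min (J := fun z => F j.+1 (In s) z /\ F j.+1 (In s) (delta z))) Hz;
  first exact: Z_ideal (F_ideal _ _).
move=> _ [x [Hx ->]].
apply: (gen_min (J := fun x => F j.+1 (In s) (phn j x) /\ F j.+1 (In s) (delta (phn j x)))) Hx;
  first exact: preim_ideal (Z_ideal (F_ideal _ _)).
move=> _ [u [v [Hu Hv ->]]].
have Huv : In s.+1 (u * v) by apply: gen_in; exists u, v.
split; first by apply: Lmono; apply: F_in; exact: Huv.
rewrite frobnM deltaM.
rewrite (_ : forall a b da db : A, a ^+ p * db + b ^+ p * da + p%:R * da * db
        = (a ^+ p + p%:R * da) * db + b ^+ p * da); last by move=> *; ring.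
apply: (idD (J := F j.+1 (In s))); first exact: F_ideal.
  apply: (idMr (J := F j.+1 (In s))); first exact: F_ideal.
  change (F j.+1 (In s) (phn j.+1 u)); apply: F_in; exact: Hu.
exact: Hda Hu Hv.
Qed.

Lemma LB s j z : F j (In s.+1) z -> F j.+1 (In s) (delta z).
Proof.
elim: s j z => [|s IH] j z; apply: LB_core => u v Hu Hv; have Hb := L2 (b := j) Hv.
  apply: (idMr (J := F j.+1 (In 0))); first exact: F_ideal.
  apply: (idX (J := F j.+1 (In 0))) => //; first exact: F_ideal.
  by rewrite addnS addn0 in Hb.
have Hda : F j.+1 (In s) (delta (phn j u)) by apply: IH; exact: F_in.
have := Lprod Hda (d := phn j v).
rewrite (_ : (j.+1 + s.+1 = j + s.+2)%N); last by rewrite addSnnS.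
move=> /(_ Hb) H.
rewrite (_ : phn j v ^+ p = phn j v ^+ p.-1 * phn j v); last first.
  by rewrite -exprSr prednK.
rewrite -mulrA mulrC; apply: (idMr (J := F j.+1 (In s.+1))); first exact: F_ideal.
by rewrite mulrC.
Qed.

Lemma size_ds k x : size (delta_seq p delta k x) = k.+1.
Proof. by elim: k => //= k IH; rewrite size_rcons IH. Qed.

Lemma nth_ds k x i : (i <= k)%N -> nth 0 (delta_seq p delta k x) i = delta_k p delta i x.
Proof.
elim: k i => [|k IH] i Hi; first by case: i Hi.
rewrite leq_eqVlt in Hi; case/orP: Hi => [/eqP -> //| Hi].
by rewrite /= nth_rcons size_ds Hi IH.
Qed.

Lemma delta_kS k x : delta_k p delta k.+1 x =
  \sum_(j < k.+1) \sum_(1 <= i < (p ^ (k - j)).+1)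
     (wcoef p (k - j) i)%:R * delta_k p delta j x ^+ (p * (p ^ (k - j) - i))
       * delta (delta_k p delta j x) ^+ i.
Proof.
rewrite {1}/delta_k /= nth_rcons size_ds ltnn eqxx.
apply: eq_bigr => j _; apply: eq_bigr => i _; rewrite nth_ds // -ltnS; exact: ltn_ord.
Qed.

Lemma mono_cong (J : A -> Prop) c a a' b b' e i : is_ideal J -> J (a - a') -> J (b - b') ->
  J (c * a ^+ e * b ^+ i - c * a' ^+ e * b' ^+ i).
Proof.
move=> HJ Ha Hb.
rewrite (_ : c * a ^+ e * b ^+ i - c * a' ^+ e * b' ^+ i =
   c * ((a ^+ e - a' ^+ e) * b ^+ i + a' ^+ e * (b ^+ i - b' ^+ i))); last by ring.
apply: idMl => //; apply: idD => //.
  by apply: idMr => //; rewrite subrXX; apply: idMr.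
by apply: idMl => //; rewrite subrXX; apply: idMr.
Qed.

Section Chain.
Variables m n : nat.
Let K j := F j (In (m + n - j)).

Lemma K_ideal j : is_ideal (K j). Proof. exact: F_ideal. Qed.

Lemma Kmono j z : (j < m)%N -> K j z -> K j.+1 z.
Proof.
move=> Hj; rewrite /K (_ : (m + n - j = (m + n - j.+1).+1)%N); last by lia.
exact: Lmono.
Qed.

Lemma Kdelta j z : (j < m)%N -> K j z -> K j.+1 (delta z).
Proof.
move=> Hj; rewrite /K (_ : (m + n - j = (m + n - j.+1).+1)%N); last by lia.
exact: LB.
Qed.

Lemma Kle k l z : (k <= l)%N -> (l <= m)%N -> K k z -> K l z.
Proof.
elim: l => [|l IH] Hkl Hlm Hz; first by case: k Hkl Hz.
rewrite leq_eqVlt in Hkl; case/orP: Hkl => [/eqP <- //| Hkl].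
apply: Kmono => //; apply: IH => //; exact: ltnW.
Qed.

Lemma Kmain x y : K 0 (x - y) -> forall j, (j <= m)%N -> forall k, (k <= j)%N ->
  K k (delta_k p delta k x - delta_k p delta k y).
Proof.
move=> H0; elim=> [|j IH] Hj k Hk; first by case: k Hk.
rewrite leq_eqVlt in Hk; case/orP: Hk => [/eqP -> | Hk]; last first.
  apply: IH => //; exact: ltnW.
rewrite !delta_kS -sumrB; apply: idsum; first exact: K_ideal.
move=> l _; rewrite -sumrB; apply: idsum_nat; first exact: K_ideal.
move=> i _.
have Hl : (l <= j)%N by rewrite -ltnS; exact: ltn_ord.
have Hdl := IH (ltnW Hj) l Hl.
apply: (mono_cong (J := K j.+1)); first exact: K_ideal.
  apply: (Kle (k := l)) => //; exact: leqW.
set a := delta_k p delta l x; set a' := delta_k p delta l y.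
rewrite -{1}(subrK a' a) (addrC (a - a')).
apply: (delta_shift (K := K l)) => //.
- exact: K_ideal.
- move=> z; apply: Kle => //; exact: leqW.
- move=> z Hz; apply: (Kle (k := l.+1)) => //; apply: Kdelta => //.
  exact: leq_ltn_trans Hl Hj.
Qed.
End Chain.
End Delta.

Unset Implicit Arguments.

Theorem lemma4p10 (p : nat) (A : comPzRingType) (delta : A -> A) (I : A -> Prop)
    (m n : nat) :
  prime p -> is_prism p delta I ->
  forall x y : A, I_n p delta I (m + n) (x - y) ->
  forall k : nat, (k <= m)%N ->
    frobn_ext p delta m (I_n p delta I n) (delta_k p delta k x - delta_k p delta k y).
Proof.
move=> pr [hd [HI _] _ _] x y Hxy k Hk.
have H0 : frobn_ext p delta 0 (I_n p delta I (m + n - 0)) (x - y).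
  by rewrite subn0; apply: gen_in; exists (x - y).
have H1 := @Kmain p A delta pr hd I m n x y H0 k Hk k (leqnn k).
have := @Kle p A delta pr hd I m n k m _ Hk (leqnn m) H1.
by rewrite addKn.
Qed.
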